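(* For an oriented classical or virtual link $L$, the forbidden maximal path polynomial $\Phi_F^{MP}(L)$ is an invariant of classical isotopy, virtual isotopy and link homotopy classes of links.
   Context: An oriented (classical or virtual) link with $n$ components is represented by a signed Gauss diagram: $n$ oriented circles, one per component, with arrows from over-crossing point to under-crossing point, each arrow carrying the sign $\pm1$ of its crossing; virtual links are equivalence classes of such diagrams under Gauss-diagram Reidemeister moves. Link homotopy is the equivalence relation generated by isotopy and crossing changes at crossings where a component crosses itself. The forbidden moves are: interchange two adjacent arrowheads, or two adjacent arrow tails, on a circle. Using forbidden and Reidemeister moves, a Gauss diagram can be reduced to one with no arrow having both endpoints on the same circle and in which, for each ordered pair $(j,k)$ of distinct circles, all arrows from circle $j$ to circle $k$ have the same sign. The forbidden quiver $\mathcal{FQ}(L)$ is the signed quiver obtained by shrinking each circle of this reduced diagram to a vertex, each arrow $e$ keeping its sign $\epsilon(e)\in\{\pm1\}$. A path in $\mathcal{FQ}(L)$ is a sequence of arrows, each starting where the previous one ends; it is non-repeating if it contains no repeated subpath (no arrow is used twice), and maximal if it cannot be composed with any further path without producing a repeated subpath. Writing $MP$ for the set of maximal non-repeating paths and $|p|$ for the length (number of arrows) of $p$, the forbidden maximal path polynomial is $\Phi_F^{MP}(L)=\sum_{p\in MP}x^{\sum_{e\in p}\epsilon(e)}y^{|p|}$. *)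

(* Defs.v *)
From Stdlib Require Import Relations.
From mathcomp Require Import all_boot all_algebra.
Set Implicit Arguments. Unset Strict Implicit. Unset Printing Implicit Defensive.
Import GRing.Theory Num.Theory.

(* An endpoint of an arrow: ((arrow label, is_head), sign) ; sign true = +1.
   Arrows go from the over-crossing point (tail) to the under-crossing
   point (head). *)
Definition endpt := ((nat * bool) * bool)%type.
(* A Gauss diagram: one word per circle (component), the word being a linear
   representative of the cyclic sequence of endpoints met along the
   oriented circle. *)
Definition gdiag := seq (seq endpt).

Definition tl (a : nat) (s : bool) : endpt := ((a, false), s).
Definition hd (a : nat) (s : bool) : endpt := ((a, true), s).

Definition gd_wf (D : gdiag) : bool :=
  uniq [seq e.1 | e <- flatten D] &&
  all (fun e : endpt => ((e.1.1, ~~ e.1.2), e.2) \in flatten D) (flatten D).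

Definition ids (D : gdiag) : seq nat := [seq e.1.1 | e <- flatten D].

Definition adjw (w : seq endpt) (x y : endpt) : bool :=
  (x \in w) && (nth x (rot 1 w) (index x w) == y).
Definition adjD (D : gdiag) x y : bool := has (fun w => adjw w x y) D.
Definition adj2 (D : gdiag) x y : bool := adjD D x y || adjD D y x.

Definition del (a : nat) (D : gdiag) : gdiag :=
  [seq [seq e <- w | e.1.1 != a] | w <- D].
Definition swap_ep (x y e : endpt) : endpt :=
  if e == x then y else if e == y then x else e.
Definition swapD (x y : endpt) (D : gdiag) : gdiag := map (map (swap_ep x y)) D.
Definition flipD (a : nat) (D : gdiag) : gdiag :=
  map (map (fun e : endpt => if e.1.1 == a then (e.1, ~~ e.2) else e)) D.
Definition rotD (i : nat) (D : gdiag) : gdiag :=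
  [seq (if k == i then rot 1 (nth [::] D k) else nth [::] D k) | k <- iota 0 (size D)].
Definition renameD (f : nat -> nat) (D : gdiag) : gdiag :=
  map (map (fun e : endpt => ((f e.1.1, e.1.2), e.2))) D.

Definition circ (D : gdiag) (x : endpt) : nat := find (fun w => x \in w) D.

Definition mR1 (D D' : gdiag) : Prop :=
  exists a s, a \notin ids D /\ adj2 D' (tl a s) (hd a s) /\ del a D' = D.
Definition mR2 (D D' : gdiag) : Prop :=
  exists a b s, a != b /\ a \notin ids D /\ b \notin ids D /\
    adj2 D' (tl a s) (tl b (~~ s)) /\ adj2 D' (hd a s) (hd b (~~ s)) /\
    del a (del b D') = D.
(* R3: arrows a : T -> M, b : T -> B, c : M -> B (top, middle, bottom strands);
   on each of the three strands the two endpoints are adjacent and the move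
   reverses their order on all three strands.  oT (resp. oM, oB) records
   whether tail a precedes tail b (resp. head a precedes tail c, head b precedes
   head c).  The admissible combinations of orders and signs (those realised by
   an actual triangle of three oriented strands in the plane) are exactly
   those with  oM+oB = sa+sb  and  oT+oB = sa+sc  (mod 2). *)
Definition mR3 (D D' : gdiag) : Prop :=
  exists a b c sa sb sc (oT oM oB : bool),
    [/\ a != b, a != c & b != c] /\
    (if oT then adjD D (tl a sa) (tl b sb) else adjD D (tl b sb) (tl a sa)) /\
    (if oM then adjD D (hd a sa) (tl c sc) else adjD D (tl c sc) (hd a sa)) /\
    (if oB then adjD D (hd b sb) (hd c sc) else adjD D (hd c sc) (hd b sb)) /\
    (oM (+) oB = sa (+) sb) /\ (oT (+) oB = sa (+) sc) /\
    D' = swapD (tl a sa) (tl b sb) (swapD (hd a sa) (tl c sc)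
           (swapD (hd b sb) (hd c sc) D)).
Definition mRot (D D' : gdiag) : Prop := exists i, i < size D /\ D' = rotD i D.
Definition mRen (D D' : gdiag) : Prop :=
  exists f : nat -> nat, injective f /\ D' = renameD f D.
Definition mFH (D D' : gdiag) : Prop :=
  exists a b s t, a != b /\ adjD D (hd a s) (hd b t) /\ D' = swapD (hd a s) (hd b t) D.
Definition mFT (D D' : gdiag) : Prop :=
  exists a b s t, a != b /\ adjD D (tl a s) (tl b t) /\ D' = swapD (tl a s) (tl b t) D.
Definition mSC (D D' : gdiag) : Prop :=
  exists a s, tl a s \in flatten D /\ circ D (tl a s) = circ D (hd a s) /\
    D' = flipD a D.

Definition isotopy_move D D' : Prop :=
  mR1 D D' \/ mR2 D D' \/ mR3 D D' \/ mRot D D' \/ mRen D D'.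

Definition viso_step (D D' : gdiag) : Prop :=
  gd_wf D /\ gd_wf D' /\ isotopy_move D D'.
Definition htpy_step (D D' : gdiag) : Prop :=
  gd_wf D /\ gd_wf D' /\ (isotopy_move D D' \/ mSC D D').
Definition forb_step (D D' : gdiag) : Prop :=
  gd_wf D /\ gd_wf D' /\ (isotopy_move D D' \/ mFH D D' \/ mFT D D').

Definition viso_equiv := clos_refl_sym_trans gdiag viso_step.
Definition htpy_equiv := clos_refl_sym_trans gdiag htpy_step.
Definition forb_equiv := clos_refl_sym_trans gdiag forb_step.

(* arrows are represented by their tails *)
Definition arrowsD (D : gdiag) : seq endpt := [seq e <- flatten D | ~~ e.1.2].
Definition src (D : gdiag) (e : endpt) : nat := circ D e.
Definition tgt (D : gdiag) (e : endpt) : nat := circ D ((e.1.1, true), e.2).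

Definition reduced (D : gdiag) : bool :=
  all (fun e => src D e != tgt D e) (arrowsD D) &&
  all (fun e => all (fun f => (src D e == src D f) ==> (tgt D e == tgt D f) ==>
                              (e.2 == f.2)) (arrowsD D)) (arrowsD D).

Definition isMP (D : gdiag) (p : seq endpt) : bool :=
  match p with
  | [::] => false
  | x :: q =>
      all (fun e => e \in arrowsD D) p && uniq p &&
      path (fun e f => tgt D e == src D f) x q &&
      ~~ has (fun e => (e \notin p) &&
                ((src D e == tgt D (last x q)) || (tgt D e == src D x)))
             (arrowsD D)
  end.

Definition wt (p : seq endpt) : int :=
  (\sum_(e <- p) (if e.2 then 1 else -1))%R.

Fixpoint seqs (k : nat) (A : seq endpt) : seq (seq endpt) :=
  match k with
  | 0 => [:: [::]]
  | k'.+1 => [seq x :: s | x <- A, s <- seqs k' A]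
  end.

(* PhiF D a k = coefficient of x^a y^k in the forbidden maximal path polynomial
   computed from the quiver of D, i.e. the number of maximal non-repeating
   paths p with sum of signs a and length k. *)
Definition PhiF (D : gdiag) (a : int) (k : nat) : nat :=
  count (fun p => isMP D p && (wt p == a)) (seqs k (arrowsD D)).

(* Main.v *)
Require Import Defs.
From Stdlib Require Import Relations.
From mathcomp Require Import all_boot all_algebra.
From mathcomp Require Import zify.
Set Implicit Arguments. Unset Strict Implicit. Unset Printing Implicit Defensive.
Import GRing.Theory Num.Theory.

Definition sg (e : endpt) : int := if e.2 then 1%R else (-1)%R.
Definition Fk (D : gdiag) (j k : nat) (e : endpt) : int :=
  if (src D e == j) && (tgt D e == k) then sg e else 0%R.
Definition Lk (D : gdiag) (j k : nat) : int := (\sum_(e <- arrowsD D) Fk D j k e)%R.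

Lemma Lk_same D D' j k : perm_eq (flatten D') (flatten D) ->
  (forall z, circ D' z = circ D z) -> Lk D' j k = Lk D j k.
Proof.
move=> P C; rewrite /Lk /arrowsD (perm_big _ (perm_filter _ P)).
by apply: eq_bigr => e _; rewrite /Fk /src /tgt !C.
Qed.

Lemma uniq_map_eq (T U : eqType) (g : T -> U) s x y :
  uniq (map g s) -> x \in s -> y \in s -> g x = g y -> x = y.
Proof.
elim: s => //= z s IH /andP[nz us]; rewrite !inE.
case/orP=> [/eqP->|xs]; case/orP=> [/eqP->|ys] //.
- by move=> E; move: nz; rewrite E (map_f g ys).
- by move=> E; move: nz; rewrite -E (map_f g xs).
- exact: IH.
Qed.

Lemma wf_uniq D : gd_wf D -> uniq (flatten D).
Proof. by case/andP=> /map_uniq. Qed.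

Lemma wf_lab D e e' : gd_wf D -> e \in flatten D -> e' \in flatten D -> e.1 = e'.1 -> e = e'.
Proof. case/andP=> u _; exact: uniq_map_eq u. Qed.

Lemma circ_eq D w x y : uniq (flatten D) -> w \in D -> x \in w -> y \in w ->
  circ D x = circ D y.
Proof.
rewrite /circ; elim: D => //= w0 D IH; rewrite cat_uniq => /and3P[u0 hn uD].
rewrite inE => /orP[/eqP->|wD] xw yw; first by rewrite xw yw.
have nx : x \notin w0.
  apply/negP=> xw0; move/hasP: hn; apply; exists x => //.
  by apply/flattenP; exists w.
have ny : y \notin w0.
  apply/negP=> yw0; move/hasP: hn; apply; exists y => //.
  by apply/flattenP; exists w.
by rewrite (negbTE nx) (negbTE ny) (IH uD wD xw yw).
Qed.

Lemma adjD_in D x y : adjD D x y -> exists2 w, w \in D & (x \in w) && (y \in w).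
Proof.
case/hasP=> w wD /andP[xw /eqP <-]; exists w => //; rewrite xw /=.
by rewrite -(mem_rot 1) mem_nth // size_rot index_mem.
Qed.

Lemma adjD_circ D x y : uniq (flatten D) -> adjD D x y ->
  [/\ x \in flatten D, y \in flatten D & circ D x = circ D y].
Proof.
move=> u /adjD_in[w wD /andP[xw yw]]; split.
- by apply/flattenP; exists w.
- by apply/flattenP; exists w.
- exact: circ_eq u wD xw yw.
Qed.

Lemma adj2_circ D x y : uniq (flatten D) -> adj2 D x y ->
  [/\ x \in flatten D, y \in flatten D & circ D x = circ D y].
Proof.
move=> u /orP[]/(adjD_circ u) // [? ? ?]; by split.
Qed.

Lemma swap_inv x y e : swap_ep x y (swap_ep x y e) = e.
Proof.
rewrite /swap_ep; case: (e =P x) => [->|nx].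
  by case: (y =P x) => [->|_]; rewrite ?eqxx.
case: (e =P y) => [->|ny]; first by rewrite eqxx.
by move/eqP/negbTE: nx => ->; move/eqP/negbTE: ny => ->.
Qed.

Lemma swap_inj x y : injective (swap_ep x y).
Proof. exact: can_inj (swap_inv x y). Qed.

Lemma circ_map D (h : endpt -> endpt) z : injective h ->
  circ (map (map h) D) (h z) = circ D z.
Proof. by move=> hi; rewrite /circ find_map; apply: eq_find => w /=; rewrite mem_map. Qed.

Lemma swap_same D x y : uniq (flatten D) -> x \in flatten D -> y \in flatten D ->
  circ D x = circ D y ->
  perm_eq (flatten (swapD x y D)) (flatten D) /\
  forall z, circ (swapD x y D) z = circ D z.
Proof.
move=> u xD yD cxy; split.
  rewrite /swapD -map_flatten.
  apply/allP => z _; apply/eqP; rewrite count_map.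
  have -> : count (preim (swap_ep x y) (pred1 z)) (flatten D) =
            count (pred1 (swap_ep x y z)) (flatten D).
    apply: eq_count => e /=; apply/eqP/eqP => [<-|->]; by rewrite swap_inv.
  rewrite !count_uniq_mem // /swap_ep.
  by case: (z =P x) => [->|_]; [rewrite yD xD|case: (z =P y) => [->|_]; rewrite ?xD ?yD].
move=> z; rewrite -{1}(swap_inv x y z) /swapD circ_map; last exact: swap_inj.
rewrite /swap_ep; case: (z =P x) => [->|_]; first by [].
by case: (z =P y) => [->|_].
Qed.

Lemma all2_same D D' : all2 (fun w w' => perm_eq w' w) D D' ->
  perm_eq (flatten D') (flatten D) /\ forall z, circ D' z = circ D z.
Proof.
elim: D D' => [|w D IH] [|w' D'] //= /andP[pw /IH[pf cf]]; split.
  exact: perm_cat.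
by move=> z; rewrite /circ /= (perm_mem pw); case: (z \in w) => //; rewrite -/(circ _ _) cf.
Qed.

Lemma rotDc i w D : Defs.rotD i (w :: D) =
  (if i == 0 then rot 1 w else w) :: (if i is i'.+1 then Defs.rotD i' D else D).
Proof.
rewrite /Defs.rotD /= eq_sym; congr (_ :: _).
rewrite -[1]/(1 + 0) iotaDl -map_comp.
case: i => [|i].
  transitivity (map (nth [::] D) (iota 0 (size D))); last by rewrite -/(mkseq _ _) mkseq_nth.
  by apply: eq_map => k.
by apply: eq_map => k /=.
Qed.

Lemma all2_refl D : all2 (fun w w' : seq endpt => perm_eq w' w) D D.
Proof. by elim: D => //= w D ->; rewrite perm_refl. Qed.

Lemma rot_same i D : all2 (fun w w' => perm_eq w' w) D (Defs.rotD i D).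
Proof.
elim: D i => [|w D IH] i; first by [].
rewrite rotDc /=; case: i => [|i] /=.
  by rewrite perm_rot perm_refl all2_refl.
by rewrite perm_refl IH.
Qed.

Definition rn (f : nat -> nat) (e : endpt) : endpt := ((f e.1.1, e.1.2), e.2).

Lemma rn_inj f : injective f -> injective (rn f).
Proof.
move=> fi [[a b] c] [[a' b'] c'] [] /fi -> -> -> //.
Qed.

Lemma Lk_ren D f j k : injective f -> Lk (renameD f D) j k = Lk D j k.
Proof.
move=> fi; have ri := rn_inj fi; rewrite /Lk.
have -> : arrowsD (renameD f D) = map (rn f) (arrowsD D).
  by rewrite /arrowsD /renameD -map_flatten filter_map.
rewrite big_map; apply: eq_bigr => e _.
rewrite /Fk /src /tgt /renameD.
have -> : ((((rn f e).1.1, true), (rn f e).2)) = rn f ((e.1.1, true), e.2) by [].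
by rewrite -/(rn f) !circ_map.
Qed.

Definition fl (a : nat) (e : endpt) : endpt := if e.1.1 == a then (e.1, ~~ e.2) else e.

Lemma fl_inv a e : fl a (fl a e) = e.
Proof.
case: e => [[n b] c]; rewrite /fl /=; case: (n =P a) => [->|ne] /=; rewrite ?eqxx ?negbK //.
by move/eqP/negbTE: ne => ->.
Qed.

Lemma Lk_flip D a s j k : gd_wf D -> tl a s \in flatten D ->
  circ D (tl a s) = circ D (hd a s) -> j != k ->
  Lk (flipD a D) j k = Lk D j k.
Proof.
move=> wf ta cc jk; have fi : injective (fl a) := can_inj (fl_inv a); rewrite /Lk.
have -> : arrowsD (flipD a D) = map (fl a) (arrowsD D).
  rewrite /arrowsD /flipD -map_flatten filter_map -/(fl a).
  by congr map; apply: eq_filter => e; rewrite /fl /=; case: ifP.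
rewrite big_map; apply: eq_big_seq => e.
rewrite mem_filter => /andP[te eD].
rewrite /Fk /src /tgt /flipD -/(fl a).
have -> : ((((fl a e).1.1, true), (fl a e).2)) = fl a ((e.1.1, true), e.2).
  by rewrite /fl /=; case: ifP.
rewrite !circ_map //.
case: (e.1.1 =P a) => ea; last by rewrite /fl /= (introF eqP ea).
have E : e = tl a s.
  apply: (wf_lab wf eD ta); rewrite /tl; case: e ea te {eD} => [[? []] ?] //= -> //.
subst e; rewrite /= cc.
case: (circ D (hd a s) =P j) => //= ->; case: (j =P k) => [E|_]; first by rewrite E eqxx in jk.
by case: (circ D ((a, true), s) =P k) => // ->; move: jk; rewrite /hd.
Qed.

Lemma arrows_del a D : arrowsD (del a D) = filter (fun e => e.1.1 != a) (arrowsD D).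
Proof.
rewrite /arrowsD /del -filter_flatten -!filter_predI; apply: eq_filter => e /=.
by rewrite andbC.
Qed.

Lemma circ_del a D z : z.1.1 != a -> circ (del a D) z = circ D z.
Proof.
move=> nz; rewrite /circ /del find_map; apply: eq_find => w /=.
by rewrite mem_filter nz.
Qed.

Lemma Fk_del a D j k e : e.1.1 != a -> Fk (del a D) j k e = Fk D j k e.
Proof. by move=> nz; rewrite /Fk /src /tgt !circ_del. Qed.

Lemma lab_tail D e a s : gd_wf D -> e \in arrowsD D -> tl a s \in flatten D ->
  e.1.1 = a -> e = tl a s.
Proof.
move=> wf; rewrite mem_filter => /andP[te eD] ta ea.
apply: (wf_lab wf eD ta); case: e ea te {eD} => [[n []] c] //= -> //.
Qed.

Lemma cond_jk (c : nat) j k : j != k -> (c == j) && (c == k) = false.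
Proof. by move=> jk; case: (c =P j) => //= ->; rewrite (negbTE jk). Qed.

Lemma Lk_R1 D D' j k : gd_wf D' -> mR1 D D' -> j != k -> Lk D j k = Lk D' j k.
Proof.
move=> wf [a [s [_ [adj <-]]]] jk.
have u := wf_uniq wf; have [tD hD c] := adj2_circ u adj.
have xA : tl a s \in arrowsD D' by rewrite mem_filter tD.
have uA : uniq (arrowsD D') := filter_uniq _ u.
rewrite /Lk [in RHS](big_rem _ xA) /= arrows_del.
have -> : Fk D' j k (tl a s) = 0%R.
  by rewrite /Fk /src /tgt /= c cond_jk.
rewrite add0r rem_filter //.
have -> : [seq e <- arrowsD D' | e.1.1 != a] = [seq e <- arrowsD D' | predC1 (tl a s) e].
  apply: eq_in_filter => e eA /=; case: (e.1.1 =P a) => ea.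
    by rewrite (lab_tail wf eA tD ea) eqxx.
  by apply/esym/negP => /eqP E; apply: ea; rewrite E.

apply/eq_big_seq => e; rewrite mem_filter => /andP[ne eA].
apply: Fk_del; apply/negP => /eqP ea; move: ne => /=.
by rewrite (lab_tail wf eA tD ea) eqxx.
Qed.

Lemma Lk_R2 D D' j k : gd_wf D' -> mR2 D D' -> j != k -> Lk D j k = Lk D' j k.
Proof.
move=> wf [a [b [s [ab [_ [_ [adjt [adjh <-]]]]]]]] jk.
have u := wf_uniq wf; have [tD tD' c] := adj2_circ u adjt.
have [hD hD' c'] := adj2_circ u adjh.
have xA : tl a s \in arrowsD D' by rewrite mem_filter tD.
have uA : uniq (arrowsD D') := filter_uniq _ u.
have xy : tl b (~~ s) != tl a s.
  by apply/eqP => -[] /eqP; rewrite eq_sym (negbTE ab).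
have yA : tl b (~~ s) \in rem (tl a s) (arrowsD D').
  by rewrite (mem_rem_uniq _ uA) inE xy mem_filter tD'.
have uA' : uniq (rem (tl a s) (arrowsD D')) := rem_uniq _ uA.
rewrite /Lk [in RHS](big_rem _ xA) /= [in RHS](big_rem _ yA) /= addrA.
have -> : (Fk D' j k (tl a s) + Fk D' j k (tl b (~~ s)) = 0)%R.
  rewrite /Fk /src /tgt /= c.
  have -> : circ D' (a, true, s) = circ D' (b, true, ~~ s) by exact: c'.
  by case: ifP => _; rewrite ?addr0 //; case: (s); rewrite /sg /=.
rewrite add0r !arrows_del (rem_filter _ uA') (rem_filter _ uA).
rewrite -(filter_predI (fun e : endpt => e.1.1 != a) (fun e => e.1.1 != b) (arrowsD D')).
rewrite -(filter_predI (predC1 (tl b (~~ s))) (predC1 (tl a s)) (arrowsD D')).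
have -> : [seq e <- arrowsD D' | predI (fun e : endpt => e.1.1 != a) (fun e => e.1.1 != b) e]
  = [seq e <- arrowsD D' | predI (predC1 (tl b (~~ s))) (predC1 (tl a s)) e].
  apply: eq_in_filter => e eA /=.
  case: (e.1.1 =P a) => ea.
    by rewrite (lab_tail wf eA tD ea) eqxx andbF.
  case: (e.1.1 =P b) => eb.
    by rewrite (lab_tail wf eA tD' eb) eqxx.
  apply/esym/andP; split; apply/eqP => E; [apply: eb|apply: ea]; by rewrite E.
apply/eq_big_seq => e; rewrite mem_filter => /andP[/andP[ne1 ne2] eA].
rewrite Fk_del ?Fk_del //.
  by apply/negP => /eqP ea; move: ne1 => /=; rewrite (lab_tail wf eA tD' ea) eqxx.
by apply/negP => /eqP ea; move: ne2 => /=; rewrite (lab_tail wf eA tD ea) eqxx.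
Qed.

Definition sameC (D D' : gdiag) : Prop :=
  perm_eq (flatten D') (flatten D) /\ forall z, circ D' z = circ D z.

Lemma sameC_Lk D D' j k : sameC D D' -> Lk D' j k = Lk D j k.
Proof. by case=> P C; exact: Lk_same. Qed.

Lemma swap_after D D1 x y : sameC D D1 -> uniq (flatten D) ->
  x \in flatten D -> y \in flatten D -> circ D x = circ D y ->
  sameC D (swapD x y D1).
Proof.
move=> [P C] u xD yD cxy.
have u1 : uniq (flatten D1) by rewrite (perm_uniq P).
have x1 : x \in flatten D1 by rewrite (perm_mem P).
have y1 : y \in flatten D1 by rewrite (perm_mem P).
have c1 : circ D1 x = circ D1 y by rewrite !C.
have [P2 C2] := swap_same u1 x1 y1 c1.
split; first exact: perm_trans P2 P.
by move=> z; rewrite C2 C.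
Qed.

Lemma sameC_refl D : sameC D D.
Proof. by split. Qed.

Lemma adjo D (o : bool) x y : uniq (flatten D) ->
  (if o then adjD D x y else adjD D y x) ->
  [/\ x \in flatten D, y \in flatten D & circ D x = circ D y].
Proof.
move=> u; case: o => /(adjD_circ u) [? ? ?]; by split.
Qed.

Lemma step_inv D D' j k : gd_wf D -> gd_wf D' ->
  (isotopy_move D D' \/ mFH D D' \/ mFT D D' \/ mSC D D') -> j != k ->
  Lk D j k = Lk D' j k.
Proof.
move=> wf wf' H jk; have u := wf_uniq wf.
case: H => [[H|[H|[H|[H|H]]]]|[H|[H|H]]].
- exact: Lk_R1 wf' H jk.
- exact: Lk_R2 wf' H jk.
- case: H => [a [b [c [sa [sb [sc [oT [oM [oB [_ [h1 [h2 [h3 [_ [_ ->]]]]]]]]]]]]]]].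
  have [x1 y1 c1] := adjo u h1; have [x2 y2 c2] := adjo u h2; have [x3 y3 c3] := adjo u h3.
  symmetry; apply: sameC_Lk.
  apply: swap_after => //; apply: swap_after => //; apply: swap_after => //.
- case: H => i [_ ->]; symmetry; apply: Lk_same; have [P C] := all2_same (rot_same i D).
  + exact: P.
  + exact: C.
- by case: H => f [fi ->]; rewrite Lk_ren.
- case: H => [a [b [s [t [_ [h ->]]]]]]; have [x1 y1 c1] := adjD_circ u h.
  symmetry; apply: sameC_Lk; apply: swap_after => //.
- case: H => [a [b [s [t [_ [h ->]]]]]]; have [x1 y1 c1] := adjD_circ u h.
  symmetry; apply: sameC_Lk; apply: swap_after => //.
- case: H => [a [s [ta [cc E]]]]; rewrite E; symmetry; exact: (Lk_flip wf ta cc jk).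
Qed.

Lemma rst_wf (R : relation gdiag) : (forall x y, R x y -> gd_wf x /\ gd_wf y) ->
  forall x y, clos_refl_sym_trans _ R x y -> (gd_wf x <-> gd_wf y).
Proof.
move=> H x y; elim => {x y} [x y /H[? ?]|x|x y _ [? ?]|x y z _ [? ?] _ [? ?]]; tauto.
Qed.

Lemma rst_Lk (R : relation gdiag) :
  (forall x y, R x y -> forall j k, j != k -> Lk x j k = Lk y j k) ->
  forall x y, clos_refl_sym_trans _ R x y -> forall j k, j != k -> Lk x j k = Lk y j k.
Proof.
move=> H x y; elim => {x y} [x y /H //|x //|x y _ IH j k jk|x y z _ IH1 _ IH2 j k jk].
- by rewrite IH.
- by rewrite IH1 // IH2.
Qed.

Definition cnt D j k b := count (fun e => (src D e == j) && (tgt D e == k) && (e.2 == b)) (arrowsD D).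

Lemma Lk_cnt D j k : Lk D j k = ((cnt D j k true)%:Z - (cnt D j k false)%:Z)%R.
Proof.
rewrite /Lk /cnt; elim: (arrowsD D) => [|e s IH]; first by rewrite big_nil.
rewrite big_cons IH /= /Fk.
case: ((src D e == j) && (tgt D e == k)) => /=; last by rewrite add0r.
case: e => [[n c] []] /=; rewrite /sg /=; lia.
Qed.

Lemma red_cnt D j k : reduced D -> cnt D j k true = 0 \/ cnt D j k false = 0.
Proof.
case/andP=> _ /allP H; rewrite /cnt.
case: (posnP (count (fun e => (src D e == j) && (tgt D e == k) && (e.2 == true)) (arrowsD D))) => [->|]; first by left.
rewrite -has_count => /hasP[e eA /andP[/andP[/eqP se /eqP te] /eqP e2]].
right; apply/eqP; rewrite -leqn0 leqNgt -has_count; apply/hasP => -[f fA /andP[/andP[/eqP sf /eqP tf] /eqP f2]].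
move/allP: (H e eA) => /(_ f fA); rewrite se sf te tf !eqxx /= e2 f2.
done.
Qed.

Lemma red_diag D j b : reduced D -> cnt D j j b = 0.
Proof.
case/andP=> /allP H _; rewrite /cnt; apply/eqP; rewrite -leqn0 leqNgt -has_count.
apply/hasP => -[e eA /andP[/andP[/eqP se /eqP te] _]].
by move: (H e eA); rewrite se te eqxx.
Qed.

Lemma cnt_eq R1 R2 j k b : reduced R1 -> reduced R2 ->
  (forall j k, j != k -> Lk R1 j k = Lk R2 j k) -> cnt R1 j k b = cnt R2 j k b.
Proof.
move=> r1 r2 L; case: (j =P k) => [<-|/eqP jk]; first by rewrite !red_diag.
have := L j k jk; rewrite !Lk_cnt.
have := red_cnt j k r1; have := red_cnt j k r2.
case: b; lia.
Qed.

Definition K D (e : endpt) := (src D e, tgt D e, e.2).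

Lemma perm_K R1 R2 : reduced R1 -> reduced R2 ->
  (forall j k, j != k -> Lk R1 j k = Lk R2 j k) ->
  perm_eq (map (K R1) (arrowsD R1)) (map (K R2) (arrowsD R2)).
Proof.
move=> r1 r2 L; apply/allP => [[[j k] b]] _; apply/eqP; rewrite !count_map.
have E D : count (preim (K D) (pred1 (j, k, b))) (arrowsD D) = cnt D j k b.
  by apply: eq_count => e; rewrite /= /K !xpair_eqE.
by rewrite !E; apply: cnt_eq.
Qed.

Lemma bij (T U : eqType) (K1 K2 : T -> U) (s1 s2 : seq T) : uniq s1 -> uniq s2 ->
  perm_eq (map K1 s1) (map K2 s2) ->
  exists f : T -> T, perm_eq (map f s1) s2 /\ {in s1, forall x, K2 (f x) = K1 x}.
Proof.
elim: s1 s2 => [|x s1 IH] s2 u1 u2 P.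
  exists id; split => //; move/perm_size: P; rewrite size_map.
  by case: s2 {u2} => //.
have : K1 x \in map K2 s2 by rewrite -(perm_mem P) mem_head.
case/mapP => y ys Ky.
have P' : perm_eq (map K1 s1) (map K2 (rem y s2)).
  have P2 : perm_eq (map K2 s2) (K2 y :: map K2 (rem y s2)).
    by rewrite -map_cons; apply: perm_map; apply: perm_to_rem.
  by move: (perm_trans P P2); rewrite /= Ky perm_cons.
case/andP: u1 => nx u1.
have [f' [Pf Kf]] := IH _ u1 (rem_uniq _ u2) P'.
exists (fun z => if z == x then y else f' z); split.
  rewrite /= eqxx.
  have -> : map (fun z => if z == x then y else f' z) s1 = map f' s1.
    apply/eq_in_map => z zs; case: (z =P x) => // E; by rewrite -E zs in nx.
  have Q : perm_eq (y :: map f' s1) (y :: rem y s2) by rewrite perm_cons.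
  by apply: perm_trans Q _; rewrite perm_sym; apply: perm_to_rem.
move=> z; rewrite inE; case: (z =P x) => [->|_] //= zs; exact: Kf.
Qed.



Lemma seqs_map (f : endpt -> endpt) k A : seqs k (map f A) = map (map f) (seqs k A).
Proof.
elim: k => [|k IH] //=.
by rewrite allpairs_mapl IH allpairs_mapr map_allpairs.
Qed.

Lemma seqs_perm k A B : perm_eq A B -> perm_eq (seqs k A) (seqs k B).
Proof.
move=> P; elim: k => [|k IH] //=; exact: perm_allpairs.
Qed.

Lemma seqs_all k A p : p \in seqs k A -> all (mem A) p.
Proof.
elim: k p => [|k IH] p /=; first by rewrite inE => /eqP->.
case/allpairsPdep => x [s [xA sS ->]] /=; rewrite xA; exact: IH.
Qed.

Lemma mem_map_in (f : endpt -> endpt) (A p : seq endpt) e :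
  {in A &, injective f} -> all (mem A) p -> e \in A -> (f e \in map f p) = (e \in p).
Proof.
move=> fi pA eA; apply/mapP/idP => [[z zp E]|ep]; last by exists e.
by rewrite (fi e z eA (allP pA z zp) E).
Qed.

Lemma PhiF_eq R1 R2 a k : gd_wf R1 -> gd_wf R2 -> reduced R1 -> reduced R2 ->
  (forall j k, j != k -> Lk R1 j k = Lk R2 j k) -> PhiF R1 a k = PhiF R2 a k.
Proof.
move=> w1 w2 r1 r2 L.
have u1 : uniq (arrowsD R1) := filter_uniq _ (wf_uniq w1).
have u2 : uniq (arrowsD R2) := filter_uniq _ (wf_uniq w2).
have [f [Pf Kf]] := bij u1 u2 (perm_K r1 r2 L).
have fi : {in arrowsD R1 &, injective f}.
  move=> x y xA yA; apply: (uniq_map_eq (s := arrowsD R1)) => //.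
  by rewrite (perm_uniq Pf).
have Ks e : e \in arrowsD R1 -> src R2 (f e) = src R1 e by move/Kf; case.
have Kt e : e \in arrowsD R1 -> tgt R2 (f e) = tgt R1 e by move/Kf; case.
have Kg e : e \in arrowsD R1 -> (f e).2 = e.2 by move/Kf; case.
rewrite /PhiF.
have Pc := seqs_perm k Pf.
rewrite -(permP Pc) seqs_map count_map.
apply: eq_in_count => p /seqs_all pA /=.
have -> : wt (map f p) = wt p.
  rewrite /wt big_map; apply: eq_big_seq => e ep; rewrite Kg //; exact: (allP pA).
congr andb.
case: p pA => [|x q] // pA.
have fA : all (fun e => e \in arrowsD R2) (map f (x :: q)).
  apply/allP => e /mapP[z zp ->]; rewrite -(perm_mem Pf) map_f //; exact: (allP pA).
have fpi : {in x :: q &, injective f}.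
  by move=> y z yp zp; apply: fi; apply: (allP pA).
rewrite /isMP -/(map f (x :: q)) fA.
have -> : all (fun e => e \in arrowsD R1) (x :: q) by exact: pA.
rewrite (map_inj_in_uniq fpi) /= last_map path_map.
have lA : last x q \in arrowsD R1 by apply: (allP pA); exact: mem_last.
have xA : x \in arrowsD R1 by apply: (allP pA); exact: mem_head.
rewrite (@eq_in_path _ (mem (arrowsD R1)) (relpre f (fun e f0 => tgt R2 e == src R2 f0))
            (fun e f0 => tgt R1 e == src R1 f0)) //; last first.
  by move=> y z yA zA /=; rewrite Kt // Ks.
congr (_ && _); rewrite -(perm_has _ Pf) has_map; congr negb.
apply: eq_in_has => e eA /=.
rewrite -/(map f (x :: q)) (mem_map_in fi pA eA) Ks // Kt // Ks // Kt //.
Qed.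

Lemma forb_inv x y : forb_step x y -> forall j k, j != k -> Lk x j k = Lk y j k.
Proof. case=> w1 [w2 H] j k; apply: step_inv => //; tauto. Qed.
Lemma viso_inv x y : viso_step x y -> forall j k, j != k -> Lk x j k = Lk y j k.
Proof. case=> w1 [w2 H] j k; apply: step_inv => //; tauto. Qed.
Lemma htpy_inv x y : htpy_step x y -> forall j k, j != k -> Lk x j k = Lk y j k.
Proof. case=> w1 [w2 H] j k; apply: step_inv => //; tauto. Qed.

Lemma forb_wf D R : gd_wf D -> forb_equiv D R -> gd_wf R.
Proof.
move=> w F.
have S : forall x y, forb_step x y -> gd_wf x /\ gd_wf y by move=> x y [? [? _]].
by have [H _] := rst_wf S F; apply: H.
Qed.

Theorem mainTheorem5 :
  (forall D1 D2 R1 R2 : gdiag,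
     gd_wf D1 -> gd_wf D2 -> viso_equiv D1 D2 ->
     forb_equiv D1 R1 -> reduced R1 -> forb_equiv D2 R2 -> reduced R2 ->
     forall (a : int) (k : nat), PhiF R1 a k = PhiF R2 a k) /\
  (forall D1 D2 R1 R2 : gdiag,
     gd_wf D1 -> gd_wf D2 -> htpy_equiv D1 D2 ->
     forb_equiv D1 R1 -> reduced R1 -> forb_equiv D2 R2 -> reduced R2 ->
     forall (a : int) (k : nat), PhiF R1 a k = PhiF R2 a k).
Proof.
split=> D1 D2 R1 R2 w1 w2 V F1 r1 F2 r2 a k;
  (apply: PhiF_eq; [exact: (forb_wf w1 F1)|exact: (forb_wf w2 F2)|exact: r1|exact: r2|]);
  move=> j l jl;
  rewrite -(rst_Lk forb_inv F1 jl) -(rst_Lk forb_inv F2 jl).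
- exact: (rst_Lk viso_inv V jl).
- exact: (rst_Lk htpy_inv V jl).
Qed.
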